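(* Let $G$ be a graph with adjacency matrix $A$, signless Laplacian $Q$, and maximum degree $\Delta$. (i) If $0\le\alpha\le1/2$, then $\rho(A_\alpha(G))\ge(1-\alpha)\rho(Q)+(2\alpha-1)\Delta$. If $G$ is connected and irregular, equality holds if and only if $\alpha=1/2$. (ii) If $1/2\le\alpha\le1$, then $\rho(A_\alpha(G))\ge\alpha\rho(Q)+(1-2\alpha)\rho(A)$. If $G$ is connected and irregular, equality holds if and only if $\alpha=1/2$.
   Context: For a graph $G$, $A(G)$ is the adjacency matrix, $D(G)$ the diagonal degree matrix, $Q(G)=D(G)+A(G)$ the signless Laplacian, and $A_\alpha(G)=\alpha D(G)+(1-\alpha)A(G)$ for $\alpha\in[0,1]$. $\rho(M)$ is the largest eigenvalue of a real symmetric matrix $M$. A graph is irregular if not all its vertices have the same degree. *)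

(* Defs.v *)
From HB Require Import structures.
From mathcomp Require Import all_boot all_order all_algebra.
Set Implicit Arguments. Unset Strict Implicit. Unset Printing Implicit Defensive.
Import Order.TTheory GRing.Theory Num.Theory.
Local Open Scope ring_scope.

Definition simple_graph (n : nat) (e : rel 'I_n) : Prop :=
  symmetric e /\ irreflexive e.

Definition deg (n : nat) (e : rel 'I_n) (i : 'I_n) : nat := #|[set j | e i j]|.

Definition maxdeg (n : nat) (e : rel 'I_n) : nat := (\max_(i < n) deg e i)%N.

Definition adjmx (R : nzRingType) (n : nat) (e : rel 'I_n) : 'M[R]_n :=
  \matrix_(i, j) (e i j)%:R.

Definition degmx (R : nzRingType) (n : nat) (e : rel 'I_n) : 'M[R]_n :=
  \matrix_(i, j) (if i == j then (deg e i)%:R else 0).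

Definition signlessQ (R : nzRingType) (n : nat) (e : rel 'I_n) : 'M[R]_n :=
  degmx R e + adjmx R e.

Definition Aalpha (R : nzRingType) (n : nat) (e : rel 'I_n) (a : R) : 'M[R]_n :=
  a *: degmx R e + (1 - a) *: adjmx R e.

Definition is_largest_eig (R : realFieldType) (n : nat) (M : 'M[R]_n) (r : R) : Prop :=
  eigenvalue M r /\ (forall mu, eigenvalue M mu -> mu <= r).

Definition connected_graph (n : nat) (e : rel 'I_n) : Prop :=
  forall i j : 'I_n, connect e i j.

Definition irregular (n : nat) (e : rel 'I_n) : Prop :=
  exists i j : 'I_n, deg e i <> deg e j.

(* Main.v *)
Require Import Defs.
From HB Require Import structures.
From mathcomp Require Import all_boot all_order all_algebra.
From mathcomp Require Import complex.
From mathcomp Require Import ring lra.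
Set Implicit Arguments. Unset Strict Implicit. Unset Printing Implicit Defensive.
Import Order.TTheory GRing.Theory Num.Theory Num.Def.
Local Open Scope ring_scope.

Section Ray.
Variable R : rcfType.
Local Notation C := (R[i]).
Local Notation phi := (real_complex R).

Lemma conj_phi (a : R) : (phi a)^* = phi a.
Proof. by apply: conj_Creal; apply/complex_realP; exists a. Qed.

Lemma map_conj_phi m k (B : 'M[R]_(m, k)) :
  map_mx conjC (map_mx phi B) = map_mx phi B.
Proof. by apply/matrixP => i j; rewrite !mxE conj_phi. Qed.

Lemma rayleigh_aux n (M : 'M[R]_n) r : M^T = M ->
  (forall mu, eigenvalue M mu -> mu <= r) ->
  forall x : 'rV[R]_n, (x *m M *m x^T) 0 0 <= r * (x *m x^T) 0 0.
Proof.
move=> Msym Hr x.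
set Mc := map_mx phi M.
have Mcherm : Mc \is hermsymmx.
  apply/is_hermitianmxP; rewrite expr0 scale1r.
  by rewrite /Mc map_trmx Msym map_conj_phi.
have /orthomx_spectralP Meq := hermitian_normalmx Mcherm.
have Pu := spectral_unitarymx Mc.
have dreal := hermitian_spectral_diag_real Mcherm.
set P := spectralmx Mc in Meq Pu.
set d := spectral_diag Mc in Meq dreal.
have PPt : P *m (map_mx conjC P^T) = 1%:M by apply/unitarymxP.
have PtP : (map_mx conjC P^T) *m P = 1%:M.
  by rewrite -invmx_unitary // mulVmx // unitarymx_unit.
rewrite invmx_unitary // in Meq.
have dle : forall j, d 0 j <= phi r.
  move=> j; have /mxOverP/(_ 0 j)/complex_realP [del Hdel] := dreal.
  rewrite Hdel lecR; apply: Hr.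
  have : eigenvalue Mc (d 0 j).
    apply/eigenvalueP; exists (row j P).
      have -> : row j P *m Mc = row j (P *m Mc) by rewrite row_mul.
      rewrite Meq !mulmxA PPt mul1mx row_mul.
      by rewrite -row_mul mul_diag_mx; apply/rowP => k; rewrite !mxE.
    apply/eqP => /(congr1 (mulmx^~ (map_mx conjC P^T))).
    rewrite -row_mul PPt mul0mx => /rowP /(_ j).
    by rewrite !mxE eqxx /= => /eqP; rewrite oner_eq0.
  by rewrite eigenvalue_root_char -map_char_poly Hdel fmorph_root -eigenvalue_root_char.
set xc := map_mx phi x.
have xct : map_mx conjC xc^T = map_mx phi x^T by rewrite /xc map_trmx map_conj_phi.
have E1 : phi ((x *m M *m x^T) 0 0) = (xc *m Mc *m map_mx conjC xc^T) 0 0.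
  by rewrite xct /xc /Mc -!map_mxM [RHS]mxE.
have E2 : phi ((x *m x^T) 0 0) = (xc *m map_mx conjC xc^T) 0 0.
  by rewrite xct /xc -!map_mxM [RHS]mxE.
set y := xc *m map_mx conjC P^T.
have yt : map_mx conjC y^T = P *m map_mx conjC xc^T.
  by rewrite /y trmx_mul map_mxM -map_trmx trmxK -map_mx_comp (map_mx_id (@conjCK _)).
have F1 : xc *m Mc *m map_mx conjC xc^T = y *m diag_mx d *m map_mx conjC y^T.
  by rewrite yt Meq /y !mulmxA.
have F2 : xc *m map_mx conjC xc^T = y *m map_mx conjC y^T.
  by rewrite yt /y mulmxA -(mulmxA xc) PtP mulmx1.
rewrite -lecR rmorphM /= E1 E2 F1 F2; clearbody y.
rewrite mul_mx_diag !mxE mulr_sumr.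
apply: ler_sum => j _; rewrite !mxE mulrAC mulrC.
by apply: ler_wpM2r; [exact: mul_conjC_ge0 | exact: dle].
Qed.
End Ray.
Section G.
Variable R : rcfType.

Definition bf n (M : 'M[R]_n) (x y : 'rV[R]_n) := (x *m M *m y^T) 0 0.

Lemma bfE n (M : 'M[R]_n) x y :
  bf M x y = \sum_j (\sum_i x 0 i * M i j) * y 0 j.
Proof.
rewrite /bf !mxE; apply: eq_bigr => j _; rewrite !mxE; congr (_ * _).
Qed.

Lemma bf_sym n (M : 'M[R]_n) x y : M^T = M -> bf M x y = bf M y x.
Proof.
move=> Ms; rewrite /bf -[in RHS](trmxK y) -[in RHS]Ms -!trmx_mul mulmxA.
by rewrite [RHS]mxE.
Qed.

Lemma bfDl n (M : 'M[R]_n) x1 x2 y : bf M (x1 + x2) y = bf M x1 y + bf M x2 y.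
Proof. by rewrite /bf !mulmxDl mxE. Qed.
Lemma bfDr n (M : 'M[R]_n) x y1 y2 : bf M x (y1 + y2) = bf M x y1 + bf M x y2.
Proof. by rewrite /bf linearD /= mulmxDr mxE. Qed.
Lemma bfZl n (M : 'M[R]_n) a x y : bf M (a *: x) y = a * bf M x y.
Proof. by rewrite /bf -!scalemxAl mxE. Qed.
Lemma bfZr n (M : 'M[R]_n) a x y : bf M x (a *: y) = a * bf M x y.
Proof. by rewrite /bf linearZ /= -scalemxAr mxE. Qed.
Lemma bfMD n (M N : 'M[R]_n) x y : bf (M + N) x y = bf M x y + bf N x y.
Proof. by rewrite /bf mulmxDr mulmxDl mxE. Qed.
Lemma bfMZ n (M : 'M[R]_n) a x y : bf (a *: M) x y = a * bf M x y.
Proof. by rewrite /bf -scalemxAr -scalemxAl mxE. Qed.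

Lemma bf_eig n (M : 'M[R]_n) r x y : x *m M = r *: x -> bf M x y = r * bf 1%:M x y.
Proof. by move=> H; rewrite /bf H mulmx1 -scalemxAl mxE. Qed.

Lemma bf1E n (x : 'rV[R]_n) : bf 1%:M x x = \sum_i x 0 i ^+ 2.
Proof.
rewrite bfE; apply: eq_bigr => j _.
rewrite (bigD1 j) //= big1 ?addr0; last by move=> i /negbTE ne; rewrite mxE ne mulr0.
by rewrite mxE eqxx mulr1 expr2.
Qed.

Lemma bf1_ge0 n (x : 'rV[R]_n) : 0 <= bf 1%:M x x.
Proof. by rewrite bf1E sumr_ge0 // => i _; rewrite sqr_ge0. Qed.

Lemma bf1_gt0 n (x : 'rV[R]_n) : x != 0 -> 0 < bf 1%:M x x.
Proof.
move=> xn0; have [j xj] : exists j, x 0 j != 0.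
  apply/existsP; apply: contraR xn0 => /existsPn H; apply/eqP/rowP => j.
  by have := H j; rewrite negbK mxE => /eqP.
rewrite bf1E (bigD1 j) //=.
have h1 : 0 < x 0 j ^+ 2 by rewrite expr2 lt_def mulf_neq0 // -expr2 sqr_ge0.
have h2 : 0 <= \sum_(i | i != j) x 0 i ^+ 2 by rewrite sumr_ge0 // => i _; rewrite sqr_ge0.
lra.
Qed.

Lemma rayleigh_eq n (M : 'M[R]_n) r (x : 'rV[R]_n) : M^T = M ->
  (forall y, bf M y y <= r * bf 1%:M y y) ->
  bf M x x = r * bf 1%:M x x -> x *m M = r *: x.
Proof.
move=> Ms Hr Hx.
set P := r *: 1%:M - M.
have Ps : P^T = P by rewrite /P linearB /= linearZ /= trmx1 Ms.
have bP u v : bf P u v = r * bf 1%:M u v - bf M u v.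
  by rewrite /P bfMD bfMZ /bf mulmxN mulNmx [X in _ + X]mxE.
have Ppos y : 0 <= bf P y y by rewrite bP subr_ge0.
have Px : bf P x x = 0 by rewrite bP Hx subrr.
have key v : bf P x v = 0.
  set b := bf P x v; set c := bf P v v.
  have c0 : 0 <= c by apply: Ppos.
  set t := - b / (c + 1).
  have c1 : c + 1 != 0 by rewrite gt_eqF // ltr_pwDr.
  have bt : b = - t * (c + 1) by rewrite /t; field.
  have := Ppos (x + t *: v).
  rewrite !(bfDl, bfDr, bfZl, bfZr) Px [bf P v x](bf_sym _ _ Ps) -/b -/c => H.
  have t0 : t = 0.
    have : t ^+ 2 * (c + 2) <= 0.
      have e1 : t * b = - (t ^+ 2 * (c + 1)) by rewrite bt; ring.
      have e2 : t * (t * c) = t ^+ 2 * c by ring.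
      rewrite e2 e1 in H; lra.
    move=> h; have h2 := sqr_ge0 t; have h3 : t ^+ 2 <= 0 by nra.
    by apply/eqP; rewrite -sqrf_eq0 eq_le h3 h2.
  by rewrite bt t0 oppr0 mul0r.
have : x *m P = 0.
  apply/rowP => j.
  have := key (delta_mx 0 j); rewrite /bf trmx_delta -colE => h.
  by move: h; rewrite !mxE.
rewrite /P mulmxBr -scalemxAr mulmx1 => /eqP; rewrite subr_eq0 => /eqP ->.
by [].
Qed.

End G.

Section Ray2.
Variable R : rcfType.
Lemma rayleigh n (M : 'M[R]_n) r : M^T = M -> is_largest_eig M r ->
  forall y, bf M y y <= r * bf 1%:M y y.
Proof. by move=> Ms [_ Hr] y; rewrite /bf mulmx1; exact: rayleigh_aux. Qed.

Lemma eigvec n (M : 'M[R]_n) r : is_largest_eig M r -> exists2 x : 'rV_n, x *m M = r *: x & x != 0.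
Proof. by move=> [/eigenvalueP H _]. Qed.
End Ray2.

Section Graph.
Variable R : rcfType.
Variable n : nat.
Variable e : rel 'I_n.
Hypothesis He : simple_graph e.

Local Notation A := (adjmx R e).
Local Notation D := (degmx R e).
Local Notation Q := (signlessQ R e).

Lemma adj_sym : A^T = A.
Proof. by apply/matrixP => i j; rewrite !mxE (proj1 He). Qed.

Lemma deg_diag : D = diag_mx (\row_i (deg e i)%:R).
Proof.
apply/matrixP => i j; rewrite !mxE; case: eqP => [->|_]; first by rewrite mulr1n.
by rewrite mulr0n.
Qed.

Lemma deg_sym : D^T = D.
Proof. by rewrite deg_diag tr_diag_mx. Qed.

Lemma Q_sym : Q^T = Q.
Proof. by rewrite /signlessQ linearD /= deg_sym adj_sym. Qed.

Lemma Aa_sym a : (Aalpha e (a : R))^T = Aalpha e a.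
Proof. by rewrite /Aalpha linearD /= !linearZ /= deg_sym adj_sym. Qed.

Lemma Aa_dec1 a : Aalpha e (a : R) = (1 - a) *: Q + (2 * a - 1) *: D.
Proof. apply/matrixP => i j; rewrite !mxE; ring. Qed.

Lemma Aa_dec2 a : a *: Q = Aalpha e (a : R) + (2 * a - 1) *: A.
Proof. apply/matrixP => i j; rewrite !mxE; ring. Qed.

Lemma bf_deg (x : 'rV[R]_n) : bf D x x = \sum_i (deg e i)%:R * x 0 i ^+ 2.
Proof.
rewrite bfE; apply: eq_bigr => j _.
rewrite (bigD1 j) //= big1 ?addr0; last first.
  by move=> i /negbTE ne; rewrite mxE ne mulr0.
by rewrite mxE eqxx expr2; ring.
Qed.

Lemma deg_le_max i : (deg e i <= maxdeg e)%N.
Proof. exact: (@leq_bigmax _ (fun i => deg e i)). Qed.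

Lemma bf_deg_le (x : 'rV[R]_n) : bf D x x <= (maxdeg e)%:R * bf 1%:M x x.
Proof.
rewrite bf_deg bf1E mulr_sumr; apply: ler_sum => i _.
by apply: ler_wpM2r; [rewrite sqr_ge0 | rewrite ler_nat deg_le_max].
Qed.

Lemma bf_deg_lt (x : 'rV[R]_n) : irregular e -> (forall i, 0 < x 0 i) ->
  bf D x x < (maxdeg e)%:R * bf 1%:M x x.
Proof.
move=> [i [j dij]] xpos.
have [k kl] : exists k, (deg e k < maxdeg e)%N.
  have hi := deg_le_max i; have hj := deg_le_max j.
  case: (ltnP (deg e i) (maxdeg e)) => [hi'|hi']; first (exists i; exact: hi').
  case: (ltnP (deg e j) (maxdeg e)) => [hj'|hj']; first (exists j; exact: hj').
  have ei : deg e i = maxdeg e by apply/eqP; rewrite eqn_leq hi hi'.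
  have ej : deg e j = maxdeg e by apply/eqP; rewrite eqn_leq hj hj'.
  by exfalso; apply: dij; rewrite ei ej.
rewrite -subr_gt0 bf_deg bf1E mulr_sumr -sumrB (bigD1 k) //=.
have h1 : 0 < (maxdeg e)%:R * x 0 k ^+ 2 - (deg e k)%:R * x 0 k ^+ 2.
  rewrite -mulrBl mulr_gt0 ?exprn_gt0 ?xpos // subr_gt0 ltr_nat; exact: kl.
have h2 : 0 <= \sum_(i0 | i0 != k) ((maxdeg e)%:R * x 0 i0 ^+ 2 - (deg e i0)%:R * x 0 i0 ^+ 2).
  apply: sumr_ge0 => l _; rewrite -mulrBl mulr_ge0 ?sqr_ge0 // subr_ge0 ler_nat.
  exact: deg_le_max.
by apply: (lt_le_trans h1); rewrite lerDl.
Qed.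

Lemma Q_ge0 i j : 0 <= Q i j.
Proof. by rewrite !mxE; apply: addr_ge0; [case: (i == j) | exact: ler0n]. Qed.

Lemma perron rQ : connected_graph e -> is_largest_eig Q rQ ->
  exists y : 'rV[R]_n, y *m Q = rQ *: y /\ forall i, 0 < y 0 i.
Proof.
move=> Hc HQ; have [x xe xn0] := eigvec HQ.
set y : 'rV[R]_n := \row_i `|x 0 i|.
have RayQ := rayleigh Q_sym HQ.
have b1 : bf 1%:M y y = bf 1%:M x x.
  by rewrite !bf1E; apply: eq_bigr => i _; rewrite mxE real_normK ?num_real.
have bq : bf Q x x <= bf Q y y.
  rewrite !bfE; apply: ler_sum => j _; rewrite !mulr_suml; apply: ler_sum => i _.
  rewrite ![y 0 _]mxE; apply: le_trans (ler_norm _) _.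
  by rewrite !normrM (ger0_norm (Q_ge0 _ _)).
have ye : y *m Q = rQ *: y.
  apply: (rayleigh_eq Q_sym RayQ).
  apply/eqP; rewrite eq_le RayQ /= b1 -(bf_eig _ xe); exact: bq.
have yge : forall i, 0 <= y 0 i by move=> i; rewrite mxE.
have propz : forall i j, e i j -> y 0 i = 0 -> y 0 j = 0.
  move=> i j eij yi.
  have hs : (y *m Q) 0 i = 0 by rewrite ye mxE yi mulr0.
  move: hs; rewrite mxE => hs.
  have := psumr_eq0P (fun k _ => mulr_ge0 (yge k) (Q_ge0 k i)) hs (isT : true).
  have eji : e j i by rewrite (proj1 He).
  have nji : (j == i) = false.
    by apply/negbTE; apply: contraTN eji => /eqP ->; rewrite (proj2 He).
  by move=> /(_ j); rewrite /signlessQ /degmx /adjmx !mxE nji eji add0r mulr1 => ->.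
have cl : forall p i, path e i p -> y 0 i = 0 -> y 0 (last i p) = 0.
  elim=> [|a p IH] i0 //= /andP [eia pth] yi0.
  exact: (IH a pth (propz _ _ eia yi0)).
have [k yk] : exists k, y 0 k != 0.
  have [k xk] : exists k, x 0 k != 0.
    apply/existsP; apply: contraR xn0 => /existsPn H; apply/eqP/rowP => j.
    by have := H j; rewrite negbK mxE => /eqP.
  by exists k; rewrite mxE normr_eq0.
exists y; split => // i; rewrite lt_def yge andbT; apply/negP => /eqP yi0.
have /connectP [p pth pl] := Hc i k.
by move: yk; rewrite pl (cl p i pth yi0) eqxx.
Qed.

End Graph.

Lemma yD_entry (R : rcfType) n (e : rel 'I_n) (y : 'rV[R]_n) i :
  (y *m degmx R e) 0 i = y 0 i * (deg e i)%:R.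
Proof. by rewrite deg_diag mul_mx_diag !mxE. Qed.

Lemma auxA (R : rcfType) (u k b d s : R) : k < 0 -> b < d * s ->
  u * s + k * b <= (u + k * d) * s -> False.
Proof. move=> *; nra. Qed.

Lemma auxB (R : rcfType) (a q c b r A s : R) : 0 <= 2 * a - 1 ->
  a * (q * s) = c + (2 * a - 1) * b -> c <= r * s -> b <= A * s ->
  (a * q + (1 - 2 * a) * A) * s <= r * s.
Proof. move=> *; nra. Qed.

Lemma auxC (R : rcfType) (a q c b A s : R) : 0 < 2 * a - 1 ->
  a * (q * s) = c + (2 * a - 1) * b ->
  c <= (a * q + (1 - 2 * a) * A) * s -> b <= A * s -> b = A * s.
Proof. move=> *; apply/eqP; rewrite eq_le; apply/andP; split => //; nra. Qed.

Theorem proposition11 (R : rcfType) (n : nat) (e : rel 'I_n)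
  (He : simple_graph e) (alpha rhoA rhoQ rhoAa : R)
  (HA : is_largest_eig (adjmx R e) rhoA)
  (HQ : is_largest_eig (signlessQ R e) rhoQ)
  (HAa : is_largest_eig (Aalpha e alpha) rhoAa) :
  (0 <= alpha -> alpha <= 2^-1 ->
     (1 - alpha) * rhoQ + (2 * alpha - 1) * (maxdeg e)%:R <= rhoAa /\
     (connected_graph e -> irregular e ->
        (rhoAa = (1 - alpha) * rhoQ + (2 * alpha - 1) * (maxdeg e)%:R
         <-> alpha = 2^-1)))
  /\
  (2^-1 <= alpha -> alpha <= 1 ->
     alpha * rhoQ + (1 - 2 * alpha) * rhoA <= rhoAa /\
     (connected_graph e -> irregular e ->
        (rhoAa = alpha * rhoQ + (1 - 2 * alpha) * rhoA <-> alpha = 2^-1))).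
Proof.
have RA := rayleigh (adj_sym R He) HA.
have RQ := rayleigh (Q_sym R He) HQ.
have RAa := rayleigh (Aa_sym He alpha) HAa.
have [x xe xn0] := eigvec HQ.
have sx := bf1_gt0 xn0.
have bQx := bf_eig x xe.
have d1 v : bf (Aalpha e alpha) v v =
    (1 - alpha) * bf (signlessQ R e) v v + (2 * alpha - 1) * bf (degmx R e) v v.
  by rewrite Aa_dec1 bfMD !bfMZ.
have d2 v : alpha * bf (signlessQ R e) v v =
    bf (Aalpha e alpha) v v + (2 * alpha - 1) * bf (adjmx R e) v v.
  by rewrite -bfMZ Aa_dec2 bfMD bfMZ.
set Dl := (maxdeg e)%:R.
have h2 : 2 * 2^-1 = 1 :> R by rewrite divff // pnatr_eq0.
have half : alpha = 2^-1 -> rhoAa = 2^-1 * rhoQ.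
  move=> ha.
  have [z ze zn0] := eigvec HAa.
  have sz := bf1_gt0 zn0.
  have u1 := bf_eig z ze.
  have u2 := d1 z; have u3 := RQ z.
  have l1 := RAa x; have l2 := d1 x.
  have c1 : 2 * alpha - 1 = 0 by rewrite ha h2 subrr.
  have c2 : 1 - alpha = 2^-1 by rewrite ha; lra.
  rewrite c1 c2 mul0r addr0 in u2; rewrite c1 c2 mul0r addr0 in l2.
  have i1 : rhoAa * bf 1%:M z z <= 2^-1 * rhoQ * bf 1%:M z z.
    rewrite -u1 u2 -mulrA ler_wpM2l // invr_ge0 ler0n //.
  have i2 : 2^-1 * rhoQ * bf 1%:M x x <= rhoAa * bf 1%:M x x.
    by rewrite -mulrA -bQx -l2.
  rewrite ler_pM2r // in i1; rewrite ler_pM2r // in i2.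
  by apply/eqP; rewrite eq_le i1 i2.
split => [a0 a1 | a0 a1].
  have ineq : (1 - alpha) * rhoQ + (2 * alpha - 1) * Dl <= rhoAa.
    rewrite -(ler_pM2r sx).
    have := RAa x; rewrite d1 bQx => h.
    have := bf_deg_le e x; rewrite -/Dl => h'.
    set b := bf (degmx R e) x x in h h'.
    set s := bf 1%:M x x in h h' sx *.
    have k0 : 2 * alpha - 1 <= 0 by lra.
    nra.
  split => // Hc Hirr; split => [heq|ha]; last first.
    by rewrite (half ha) ha; lra.
  have [ha0|alt] := eqVneq alpha 2^-1; first exact: ha0.
  have alt' : alpha < 2^-1 by rewrite lt_def eq_sym alt a1.
  have k0 : 2 * alpha - 1 < 0 by lra.
  have [y [ye ypos]] := perron He Hc HQ.
  have yn0 : y != 0.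
    apply/eqP => y0.
    have [k _] : exists k, x 0 k != 0.
      apply/existsP; apply: contraR xn0 => /existsPn H; apply/eqP/rowP => j.
      by have := H j; rewrite negbK mxE => /eqP.
    by have := ypos k; rewrite y0 mxE ltxx.
  have sy := bf1_gt0 yn0.
  have := RAa y; rewrite d1 (bf_eig y ye) => h.
  have := bf_deg_lt Hirr ypos; rewrite -/Dl => h'.
  set b := bf (degmx R e) y y in h h'.
  set s := bf 1%:M y y in h h' sy.
  move: h; rewrite mulrA => h.
  rewrite heq in h; exfalso; exact: (auxA k0 h' h).
have ineq : alpha * rhoQ + (1 - 2 * alpha) * rhoA <= rhoAa.
  rewrite -(ler_pM2r sx).
  have := d2 x; rewrite bQx => h.
  have h1 := RAa x; have h3 := RA x.
  have k0 : 0 <= 2 * alpha - 1 by lra.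
  exact: (auxB k0 h h1 h3).
split => // Hc Hirr; split => [heq|ha]; last first.
  by rewrite (half ha) ha; lra.
have [ha0|alt] := eqVneq alpha 2^-1; first exact: ha0.
have alt' : 2^-1 < alpha by rewrite lt_def alt a0.
have k0 : 0 < 2 * alpha - 1 by lra.
have [y [ye ypos]] := perron He Hc HQ.
have yn0 : y != 0.
  apply/eqP => y0.
  have [k _] : exists k, x 0 k != 0.
    apply/existsP; apply: contraR xn0 => /existsPn H; apply/eqP/rowP => j.
    by have := H j; rewrite negbK mxE => /eqP.
  by have := ypos k; rewrite y0 mxE ltxx.
have sy := bf1_gt0 yn0.
have yA : y *m adjmx R e = rhoA *: y.
  apply: (rayleigh_eq (adj_sym R He) RA).
  have := d2 y; rewrite (bf_eig y ye) => h.
  have h1 := RAa y; have h3 := RA y.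
  rewrite heq in h1; exact: (auxC k0 h h1 h3).
have yD : y *m degmx R e = (rhoQ - rhoA) *: y.
  by rewrite scalerBl -ye -yA /signlessQ mulmxDr addrK.
have degc i : (deg e i)%:R = rhoQ - rhoA.
  have := yD_entry e y i; rewrite yD mxE => h.
  apply: (mulIf (negbT (gt_eqF (ypos i)))); by rewrite h mulrC.
exfalso; case: Hirr => i [j dij]; apply: dij; apply/eqP.
by rewrite -(eqr_nat R) !degc.
Qed.
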